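(* Consider a UVP instance with finite configuration set $\mathcal{X}\subset\mathbb{R}^d$, maximum per-configuration budget $T$, total budget $B$, and unknown value function $A$ satisfying the monotonicity and smoothness assumptions with parameter $\epsilon>0$. Let $k=\lfloor B/T\rfloor$ denote the number of configurations selected by Enhanced-FullCent, and let $r_k^\star$ be the optimal $k$-center radius of $\mathcal{X}$. Then Enhanced-FullCent (run with parameter $\epsilon$) achieves a $(1-2\epsilon r_k^\star)$-approximation for the UVP problem: its output $\hat{\mathbf{x}}$ satisfies $A(\hat{\mathbf{x}},T)\ge(1-2\epsilon r_k^\star)\max_{\mathbf{x}\in\mathcal{X}}A(\mathbf{x},T)$.
   Context: UVP problem: $A:\mathbb{R}^d\times[T]\to[0,1]$ is unknown ($[T]=\{1,\dots,T\}$); $\mathcal{X}=\{\mathbf{x}_1,\dots,\mathbf{x}_n\}$ is known; the goal is $\max_{b_1,\dots,b_n}\max_i A(\mathbf{x}_i,b_i)$ subject to $\sum_ib_i\le B$. Obtaining $A(\mathbf{x},b)$ requires evaluating $A(\mathbf{x},1),\dots,A(\mathbf{x},b)$ sequentially, costing $b$ units. Assumption 1: $b_1\le b_2\Rightarrow A(\mathbf{x},b_1)\le A(\mathbf{x},b_2)$. Assumption 2: for all $\mathbf{x}_i,\mathbf{x}_j\in\mathcal{X}$, $\min_{b\in[T]}A(\mathbf{x}_i,b)/A(\mathbf{x}_j,b)\ge1-\epsilon\|\mathbf{x}_i-\mathbf{x}_j\|_2$ (ratio $=1$ if both values are $0$, $+\infty$ if only the denominator is $0$). $r_k^\star=\min_{\mathcal{C}\subseteq\mathcal{X},|\mathcal{C}|=k}\max_{\mathbf{x}\in\mathcal{X}}\min_{\mathbf{c}\in\mathcal{C}}\|\mathbf{x}-\mathbf{c}\|_2$.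 For a center $\mathbf{c}$ with evaluated history, $H^{(\mathbf{c})}_{\mathrm{last}}$ is its most recently observed value. Enhanced k-center $\textsc{E-KCenter}(k,\mathcal{C},\mathcal{X},t,\epsilon)$: with $\mathcal{C}^{(0)}=\mathcal{C}$, for $i=1,\dots,k$: for each $\mathbf{x}\in\mathcal{X}\setminus\mathcal{C}^{(i-1)}$ and $\mathbf{c}\in\mathcal{C}^{(i-1)}$ compute $\eta^{(i)}_{\mathbf{c}}=\max_{\mathbf{c}'\in\mathcal{C}^{(i-1)}}H^{(\mathbf{c}')}_{\mathrm{last}}/H^{(\mathbf{c})}_{\mathrm{last}}$ and the enhanced distance $\tilde d^{(i)}(\mathbf{x},\mathbf{c})=\min\{\|\mathbf{x}-\mathbf{c}\|_2,\ \eta^{(i)}_{\mathbf{c}}\|\mathbf{x}-\mathbf{c}\|_2-\frac1\epsilon(\eta^{(i)}_{\mathbf{c}}-1)\}$; let $\Delta^{(i)}(\mathbf{x})=\min_{\mathbf{c}\in\mathcal{C}^{(i-1)}}\tilde d^{(i)}(\mathbf{x},\mathbf{c})$ (a minimum over the empty set is $+\infty$); choose $\mathbf{c}_i\in\arg\max_{\mathbf{x}\in\mathcal{X}\setminus\mathcal{C}^{(i-1)}}\Delta^{(i)}(\mathbf{x})$, evaluate $A(\mathbf{c}_i,1),\dots,A(\mathbf{c}_i,t)$, and set $\mathcal{C}^{(i)}=\mathcal{C}^{(i-1)}\cup\{\mathbf{c}_i\}$. Enhanced-FullCent$(B,T,\mathcal{X},\epsilon)$: with $k=\lfloor B/T\rfloor$,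 run $\textsc{E-KCenter}(k,\emptyset,\mathcal{X},T,\epsilon)$ to obtain centers $\mathcal{C}$ (each evaluated up to budget $T$) and return $\arg\max_{\mathbf{c}\in\mathcal{C}}A(\mathbf{c},T)$. *)

(* Defs.v *)
From mathcomp Require Import all_boot all_order all_algebra.
From mathcomp Require Import constructive_ereal.
Set Implicit Arguments. Unset Strict Implicit. Unset Printing Implicit Defensive.
Import Order.TTheory GRing.Theory Num.Theory.
Local Open Scope ring_scope.

Definition dist2 (R : rcfType) (d : nat) (x y : 'rV[R]_d) : R :=
  Num.sqrt (\sum_(i < d) (x 0 i - y 0 i) ^+ 2).

(* Ratio a/b with the paper's convention: 1 if both are 0, +oo if only b is 0. *)
Definition ratioE (R : rcfType) (a b : R) : \bar R :=
  if b == 0 then (if a == 0 then 1%E else +oo%E) else (a / b)%:E.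

Definition monotone_budget (R : rcfType) (d : nat) (A : 'rV[R]_d -> nat -> R) (T : nat) :=
  forall x b1 b2, (1 <= b1)%N -> (b1 <= b2)%N -> (b2 <= T)%N -> A x b1 <= A x b2.

Definition smooth_on (R : rcfType) (d n : nat) (X : 'I_n -> 'rV[R]_d)
    (A : 'rV[R]_d -> nat -> R) (T : nat) (eps : R) :=
  forall i j b, (1 <= b <= T)%N ->
    ((1 - eps * dist2 (X i) (X j))%:E <= ratioE (A (X i) b) (A (X j) b))%E.

Definition cover_radius (R : rcfType) (d n : nat) (X : 'I_n -> 'rV[R]_d)
    (S : {set 'I_n}) : \bar R :=
  \big[Order.max/-oo%E]_(i < n) \big[Order.min/+oo%E]_(c in S) (dist2 (X i) (X c))%:E.

(* Optimal k-center radius r_k^* : minimum over C subset of X with |C| = k.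
   (For k > n no such C exists; we then use |C| = n, giving radius 0.) *)
Definition rstar (R : rcfType) (d n : nat) (X : 'I_n -> 'rV[R]_d) (k : nat) : \bar R :=
  \big[Order.min/+oo%E]_(S : {set 'I_n} | #|S| == minn k n) cover_radius X S.

(* eta_c = max_{c' in C} H_last(c') / H_last(c), where H_last(c) = A(c, t). *)
Definition eta (R : rcfType) (d n : nat) (X : 'I_n -> 'rV[R]_d)
    (A : 'rV[R]_d -> nat -> R) (t : nat) (C : seq 'I_n) (c : 'I_n) : \bar R :=
  \big[Order.max/-oo%E]_(c' <- C) ratioE (A (X c') t) (A (X c) t).

(* Enhanced distance min{dd, eta*dd - (eta-1)/eps}; for eta = +oo we take the
   limit value: -oo if dd < 1/eps, dd otherwise. *)
Definition etilde (R : rcfType) (eps : R) (et : \bar R) (dd : R) : \bar R :=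
  match et with
  | EFin e => (Order.min dd (e * dd - (e - 1) / eps))%:E
  | EPInf => if dd < 1 / eps then -oo%E else dd%:E
  | ENInf => dd%:E
  end.

Definition Delta (R : rcfType) (d n : nat) (X : 'I_n -> 'rV[R]_d)
    (A : 'rV[R]_d -> nat -> R) (t : nat) (eps : R) (C : seq 'I_n) (x : 'I_n)
    : \bar R :=
  \big[Order.min/+oo%E]_(c <- C) etilde eps (eta X A t C c) (dist2 (X x) (X c)).

(* s is a possible run of E-KCenter(k, emptyset, X, t, eps): the centers in
   selection order; each new center lies outside the previously selected ones
   and maximizes Delta among them (ties broken arbitrarily).  The run stops
   after k steps, or earlier if X is exhausted. *)
Definition ekcenter_run (R : rcfType) (d n : nat) (X : 'I_n -> 'rV[R]_d)
    (A : 'rV[R]_d -> nat -> R) (t : nat) (eps : R) (k : nat) (s : seq 'I_n) : Prop :=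
  size s = minn k n /\
  forall p c q, s = p ++ c :: q ->
    c \notin p /\
    forall y, y \notin p -> (Delta X A t eps p y <= Delta X A t eps p c)%E.

(* xo is a possible output of Enhanced-FullCent(B, T, X, eps):
   an argmax of A(., T) over the centers of some run with k = B / T. *)
Definition efullcent_output (R : rcfType) (d n : nat) (X : 'I_n -> 'rV[R]_d)
    (A : 'rV[R]_d -> nat -> R) (B T : nat) (eps : R) (o : 'I_n) : Prop :=
  exists s, ekcenter_run X A T eps (B %/ T) s /\ o \in s /\
    forall c, c \in s -> A (X c) T <= A (X o) T.

(* Main.v *)
Require Import Defs.
From mathcomp Require Import all_boot all_order all_algebra.
From mathcomp Require Import constructive_ereal.
From mathcomp Require Import ring lra.
Import Order.TTheory GRing.Theory Num.Theory.
Local Open Scope ring_scope.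

Lemma dist2_ge0 (R : rcfType) d (x y : 'rV[R]_d) : 0 <= dist2 x y.
Proof. exact: sqrtr_ge0. Qed.

Lemma dist2_sym (R : rcfType) d (x y : 'rV[R]_d) : dist2 x y = dist2 y x.
Proof.
rewrite /dist2; congr Num.sqrt; apply: eq_bigr => i _.
by rewrite -sqrrN opprB.
Qed.

Arguments dist2_ge0 {R d}.
Arguments dist2_sym {R d}.
Lemma cauchy_schwarz (R : rcfType) d (a b : 'I_d -> R) :
  (\sum_i a i * b i) ^+ 2 <= (\sum_i a i ^+ 2) * (\sum_i b i ^+ 2).
Proof.
have E : \sum_i \sum_j (a i * b j - a j * b i) ^+ 2 =
   2 * ((\sum_i a i ^+ 2) * (\sum_i b i ^+ 2) - (\sum_i a i * b i) ^+ 2).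
  have E1 : forall i j, (a i * b j - a j * b i) ^+ 2 =
      (a i ^+ 2 * b j ^+ 2 + a j ^+ 2 * b i ^+ 2) - 2 * ((a i * b i) * (a j * b j)).
    by move=> i j; ring.
  under eq_bigr => i _ do under eq_bigr => j _ do rewrite E1.
  under eq_bigr => i _ do rewrite sumrB big_split /=.
  rewrite sumrB big_split /= -!big_distrlr /=.
  have E2 : \sum_i \sum_j a j ^+ 2 * b i ^+ 2 = (\sum_i b i ^+ 2) * (\sum_i a i ^+ 2).
    by rewrite big_distrlr; apply: eq_bigr => i _; apply: eq_bigr => j _; exact: mulrC.
  have E3 : \sum_i \sum_j 2 * (a i * b i * (a j * b j)) = 2 * (\sum_i a i * b i) ^+ 2.
    by rewrite expr2 big_distrlr mulr_sumr; apply: eq_bigr => i _; rewrite mulr_sumr.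
  rewrite E2 E3; ring.
have H : 0 <= \sum_i \sum_j (a i * b j - a j * b i) ^+ 2.
  by apply: sumr_ge0 => i _; apply: sumr_ge0 => j _; exact: sqr_ge0.
rewrite E in H; lra.
Qed.

Lemma dist2_tri (R : rcfType) d (x y z : 'rV[R]_d) :
  dist2 x z <= dist2 x y + dist2 y z.
Proof.
rewrite /dist2.
set a := fun i : 'I_d => x 0 i - y 0 i.
set b := fun i : 'I_d => y 0 i - z 0 i.
have -> : \sum_(i < d) (x 0 i - z 0 i) ^+ 2 =
   \sum_i a i ^+ 2 + \sum_i b i ^+ 2 + 2 * \sum_i a i * b i.
  rewrite mulr_sumr -!big_split /=; apply: eq_bigr => i _; rewrite /a /b; ring.
change (\sum_(i < d) (x 0 i - y 0 i) ^+ 2) with (\sum_i a i ^+ 2).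
change (\sum_(i < d) (y 0 i - z 0 i) ^+ 2) with (\sum_i b i ^+ 2).
set V := \sum_i a i ^+ 2. set W := \sum_i b i ^+ 2. set S := \sum_i a i * b i.
have V0 : 0 <= V by apply: sumr_ge0 => i _; exact: sqr_ge0.
have W0 : 0 <= W by apply: sumr_ge0 => i _; exact: sqr_ge0.
have CS : S ^+ 2 <= V * W := @cauchy_schwarz R d a b.
have HS : S <= Num.sqrt V * Num.sqrt W.
  rewrite -sqrtrM //; apply: le_trans (ler_norm S) _.
  by rewrite -sqrtr_sqr; exact: ler_wsqrtr.
have -> : Num.sqrt V + Num.sqrt W = Num.sqrt ((Num.sqrt V + Num.sqrt W) ^+ 2).
  by rewrite sqrtr_sqr ger0_norm // addr_ge0 // sqrtr_ge0.
apply: ler_wsqrtr.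
rewrite sqrrD !sqr_sqrtr //; lra.
Qed.
Arguments dist2_tri {R d}.
Lemma etilde_le (R : rcfType) (eps : R) et dd : (etilde eps et dd <= dd%:E)%E.
Proof.
case: et => [e| |] /=; first by rewrite lee_fin ge_min lexx.
  by case: ifP => _ //; rewrite leNye.
by [].
Qed.

Lemma etilde_far (R : rcfType) (eps : R) et dd : 0 < eps -> (1 <= et)%E ->
  1 / eps <= dd -> etilde eps et dd = dd%:E.
Proof.
move=> e0; case: et => [e| |] //= e1 hd.
  rewrite lee_fin in e1; congr EFin; apply/min_idPl.
  have h : 0 <= (e - 1) * (dd - 1 / eps) by apply: mulr_ge0; lra.
  have -> : (e - 1) / eps = (e - 1) * (1 / eps) by rewrite mul1r.
  nra.
by rewrite ltNge hd.
Qed.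

Lemma etilde_near (R : rcfType) (eps r e dd : R) : 0 < eps ->
  2 * r < dd -> 2 * eps * r < 1 - e * (1 - eps * dd) ->
  ((2 * r)%:E < etilde eps e%:E dd)%E.
Proof.
move=> e0 h1 h2 /=; rewrite lte_fin lt_min h1 /=.
have -> : e * dd - (e - 1) / eps = (1 - e * (1 - eps * dd)) / eps.
  by field; rewrite gt_eqF.
by rewrite ltr_pdivlMr //; nra.
Qed.

Lemma bigmin_exists (R : rcfType) (I : Type) (r : seq I) (P : pred I)
  (F : I -> \bar R) (y : R) :
  (\big[Order.min/+oo%E]_(i <- r | P i) F i <= y%:E)%E ->
  exists i, P i /\ (F i <= y%:E)%E.
Proof.
elim: r => [|h t IH]; first by rewrite big_nil.
rewrite big_cons; case: ifP => Ph; last exact: IH.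
by rewrite ge_min => /orP [H|H]; [exists h | exact: IH].
Qed.

Lemma ratioE_self (R : rcfType) (b : R) : ratioE b b = 1%E.
Proof.
by rewrite /ratioE; case: ifP => [->//|/negbT h]; rewrite divff.
Qed.

Lemma split_at (T : Type) (x0 : T) (s : seq T) j : (j < size s)%N ->
  s = take j s ++ nth x0 s j :: drop j.+1 s.
Proof. by move=> h; rewrite -drop_nth // cat_take_drop. Qed.

Lemma nth_in_take (T : eqType) (x0 : T) (s : seq T) i j :
  (i < j)%N -> (j <= size s)%N -> nth x0 s i \in take j s.
Proof.
move=> ij js; rewrite -(nth_take x0 ij); apply: mem_nth.
by rewrite size_takel.
Qed.
Arguments etilde_le {R}.
Arguments ratioE_self {R}.
Arguments split_at {T} x0 {s j}.
Arguments nth_in_take {T} x0 {s i j}.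

Theorem theorem6 (R : rcfType) (d n : nat) (X : 'I_n -> 'rV[R]_d)
    (A : 'rV[R]_d -> nat -> R) (B T : nat) (eps r : R) (o : 'I_n) :
  injective X ->
  (0 < T)%N ->
  0 < eps ->
  (forall x b, (1 <= b <= T)%N -> 0 <= A x b <= 1) ->
  monotone_budget A T ->
  smooth_on X A T eps ->
  rstar X (B %/ T) = r%:E ->
  efullcent_output X A B T eps o ->
  (1 - 2 * eps * r) * \big[Num.max/0]_(j < n) A (X j) T <= A (X o) T.
Proof.
move=> _ T0 eps0 Abnd _ smooth Hr [s [[Hsize Hrun] [os Hos]]].
have TT : (1 <= T <= T)%N by rewrite T0 leqnn.
have A0 : forall x, 0 <= A x T by move=> x; case/andP: (Abnd x T TT).
set M := A (X o) T.
have M0 : 0 <= M := A0 _.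
suff key : forall m, (1 - 2 * eps * r) * A (X m) T <= M.
  apply: (big_ind (fun z => (1 - 2 * eps * r) * z <= M)).
  - by rewrite mulr0.
  - by move=> x y hx hy; rewrite maxEle; case: ifP.
  - by move=> j _; exact: key.
move=> m; rewrite leNgt; apply/negP => Hlt.
set a := A (X m) T in Hlt.
have an0 : a != 0 by apply/eqP => a0; rewrite a0 mulr0 in Hlt; lra.
have a0 : 0 < a by rewrite lt_neqAle eq_sym an0 A0.
have Hsm : forall c, (1 - eps * dist2 (X c) (X m)) * a <= A (X c) T.
  move=> c; have := smooth c m T TT.
  by rewrite /ratioE (negbTE an0) lee_fin ler_pdivlMr.
have [S [/eqP cardS HS]] : exists S : {set 'I_n},
    #|S| == minn (B %/ T) n /\ (cover_radius X S <= r%:E)%E.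
  by apply: bigmin_exists; rewrite -Hr /rstar.
have Hex : forall i, exists c, (c \in S) /\ dist2 (X i) (X c) <= r.
  move=> i.
  have : (\big[Order.min/+oo%E]_(c in S) (dist2 (X i) (X c))%:E <= r%:E)%E.
    apply: le_trans HS; rewrite /cover_radius.
    exact: le_bigmax.
  by move/bigmin_exists => [c [cS]]; rewrite lee_fin => h; exists c.
pose f i := odflt i [pick c in S | dist2 (X i) (X c) <= r].
have Hf : forall i, f i \in S /\ dist2 (X i) (X (f i)) <= r.
  move=> i; rewrite /f; case: pickP => [c /andP [h1 h2] //|H].
  by have [c [cS cr]] := Hex i; move: (H c); rewrite cS cr.
have r0 : 0 <= r by have [_ h] := Hf m; exact: le_trans (dist2_ge0 _ _) h.
have Hmax : forall c, c \in s -> A (X c) T <= M by exact: Hos.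
have ms : m \notin s.
  apply/negP => /Hmax h; have h' : a <= M := h.
  have := mulr_ge0 (mulr_ge0 (ltW eps0) r0) (ltW a0).
  lra.
have Huniq : uniq s.
  case Hu: (uniq s) => //; move/negbT/(uniqPn o): Hu => [i [j [ij js Heq]]].
  have [h _] := Hrun _ _ _ (split_at o js).
  by move: h; rewrite -Heq nth_in_take // ltnW.
set L := m :: s.
have UL : uniq L by rewrite /= ms Huniq.
have nUL : ~~ uniq (map f L).
  apply/negP => U.
  have sub : {subset map f L <= enum S}.
    by move=> x /mapP [y _ ->]; rewrite mem_enum; case: (Hf y).
  have := uniq_leq_size U sub.
  by rewrite size_map /= Hsize -cardS cardE ltnn.
move/(uniqPn o): nUL => [i [j [ij]]]; rewrite size_map => jL.
have iL : (i < size L)%N by apply: ltn_trans jL.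
rewrite !(nth_map o) // => Hfe.
set u := nth o L i in Hfe. set v := nth o L j in Hfe.
have uv : dist2 (X u) (X v) <= 2 * r.
  apply: le_trans (dist2_tri (X u) (X (f u)) (X v)) _.
  rewrite Hfe (dist2_sym (X (f v))).
  have [_ h1] := Hf u; have [_ h2] := Hf v.
  rewrite Hfe in h1; lra.
have vs : v \in s.
  have gen : forall j', (0 < j')%N -> (j' < size L)%N -> nth o L j' \in s.
    by case=> // j' _ /= h; apply: mem_nth.
  exact: gen (leq_ltn_trans (leq0n i) ij) jL.
case: i ij iL @u uv Hfe => [|i] ij iL u uv Hfe.
  have h := Hsm v; have h2 := Hmax v vs.
  rewrite dist2_sym in uv.
  have : eps * dist2 (X v) (X m) <= eps * (2 * r) by rewrite ler_pM2l.
  nra.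
case: j ij jL @v vs uv Hfe => // j ij jL v vs uv Hfe.
have js : (j < size s)%N by exact: jL.
have [_ Hsel] := Hrun _ _ _ (split_at o js).
have up : u \in take j s by rewrite /u /= nth_in_take // ltnW.
have mp : m \notin take j s by apply: contra ms; exact: mem_take.
have := Hsel m mp.
set p := take j s.
apply/negP; rewrite -ltNge.
apply: (@le_lt_trans _ _ (2 * r)%:E).
- rewrite /Delta big_seq.
  apply: (@le_trans _ _ (etilde eps (eta X A T p u) (dist2 (X v) (X u)))).
    have := ge_bigmin_seq +oo%E u (fun i => i \in p) (fun c => etilde eps (eta X A T p c) (dist2 (X v) (X c))) up up.
    exact.
  apply: le_trans (etilde_le _ _ _) _.
  by rewrite lee_fin dist2_sym.
- rewrite /Delta big_seq; apply: lt_bigmin => [|c' c'p]; first exact: ltry.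
  have c's : c' \in s by exact: mem_take c'p.
  set D := dist2 (X m) (X c').
  set b := A (X c') T.
  have hb : (1 - eps * D) * a <= b by rewrite /D dist2_sym; exact: Hsm.
  have bM : b <= M by exact: Hmax.
  have D2r : 2 * r < D.
    have : (1 - eps * D) * a < (1 - 2 * eps * r) * a by lra.
    rewrite ltr_pM2r // => h.
    have : eps * (2 * r) < eps * D by lra.
    by rewrite ltr_pM2l.
  have eta1 : (1 <= eta X A T p c')%E.
    rewrite /eta -(ratioE_self b).
    exact: (le_bigmax_seq _ c' predT (fun c'' => ratioE (A (X c'') T) (A (X c') T)) c'p).

  have [Dfar|Dnear] := leP (1 / eps) D.
    by rewrite etilde_far // lte_fin.
  have hD : eps * D < 1 by move: Dnear; rewrite ltr_pdivlMr // mulrC.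
  have b0 : 0 < b.
    have : 0 < (1 - eps * D) * a by apply: mulr_gt0 => //; lra.
    lra.
  have etaM : (eta X A T p c' <= (M / b)%:E)%E.
    rewrite /eta big_seq; apply: bigmax_le => [|c'' c''p]; first exact: leNye.
    rewrite /ratioE (negbTE (lt0r_neq0 b0)) lee_fin.
    by rewrite ler_pM2r ?invr_gt0 //; apply: Hmax; exact: mem_take c''p.
  case Heta: (eta X A T p c') etaM eta1 => [e| |] //.
  rewrite !lee_fin => eM e1.
  apply: etilde_near => //.
  have eb : e * b <= M by rewrite -ler_pdivlMr.
  have h1 : e * ((1 - eps * D) * a) <= e * b by rewrite ler_wpM2l //; lra.
  have h3 : e * (1 - eps * D) * a < (1 - 2 * eps * r) * a by rewrite -mulrA; lra.
  rewrite ltr_pM2r // in h3; lra.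
Qed.
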